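(* Let $Z$ be a uniform read-$d$-times NBP and let $X\subseteq V(Z)$ separate two disjoint subsets $Y_1,Y_2$ of $Vars(Z)$. Let $Y'_1\subseteq Y_1$, $Y'_2\subseteq Y_2$, let $S$ be an assignment (set of literals) to $Vars(Z)\setminus(Y_1\cup Y_2)$, and let $Q',Q''$ be computational paths of $Z$ passing through all vertices of $X$ with $S\subseteq A(Q')\cap A(Q'')$, such that $Q'$ assigns all variables of $Y'_1$ negatively and $Q''$ assigns all variables of $Y'_2$ negatively. Then there is a computational path $Q^*$ of $Z$ passing through all vertices of $X$ with $S\subseteq A(Q^* )$ that assigns all variables of $Y'_1\cup Y'_2$ negatively.
   Context: An NBP $Z$ is a directed acyclic multigraph with one source and one sink, some edges labelled with literals; $Vars(Z)$ is the set of variables labelling edges. A source-sink path $P$ is computational if no variable occurs on it with both signs; $A(P)$ is the set of literals labelling its edges; $P$ assigns a variable $y$ negatively if $\neg y\in A(P)$. Read-$d$-times: each variable labels at most $d$ edges of each source-sink path; uniform: exactly $d$. A partition of a path $P$ is a sequence $P_1,\dots,P_c$ of subpaths with $P_1$ a prefix, $P_c$ a suffix, and the first vertex of $P_i$ equal to the last vertex of $P_{i-1}$; the set $X$ of the ends of $P_1,\dots,P_{c-1}$ generates this partition. A set $X\subseteq V(Z)$ not containing the source or sink separates disjoint sets $Y_1,Y_2$ of variables if there is a computational path $P$ through all vertices of $X$ such that, in the partition $P_1,\dots,P_{|X|+1}$ generated by $X$ on $P$, either variables of $Y_1$ label edges only of $P_i$ with $i$ odd and variables of $Y_2$ only of $P_i$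 with $i$ even, or vice versa. *)

(* Defs.v *)
From mathcomp Require Import all_boot.
Set Implicit Arguments. Unset Strict Implicit. Unset Printing Implicit Defensive.

(* A literal over variables of type Var is a pair (x, b): b = true is the
   positive literal x, b = false is the negative literal ~x. *)
Definition literal (Var : finType) := (Var * bool)%type.

(* The data of a labelled directed multigraph with distinguished source and
   sink: edge e goes from [tl e] to [hd e]; [lab e = None] means unlabelled. *)
Record nbp (Var : finType) := NBP {
  vtx : finType;
  edge : finType;
  tl : edge -> vtx;
  hd : edge -> vtx;
  lab : edge -> option (literal Var);
  src : vtx;
  snk : vtx }.

Section NBPDefs.
Variable Var : finType.
Variable Z : nbp Var.

Local Notation V := (vtx Z).
Local Notation E := (edge Z).

Fixpoint is_walk (u : V) (p : seq E) : bool :=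
  match p with
  | [::] => true
  | e :: p' => (tl e == u) && is_walk (hd e) p'
  end.

Definition walk_vertices (u : V) (p : seq E) : seq V := u :: map (@hd _ Z) p.

Definition is_source (v : V) : Prop := forall e : E, hd e <> v.
Definition is_sink (v : V) : Prop := forall e : E, tl e <> v.

Definition nbp_wf : Prop :=
  (forall (v : V) (p : seq E), is_walk v p -> last v (map (@hd _ Z) p) = v ->
      p = [::]) /\
  (forall v : V, is_source v <-> v = src Z) /\
  (forall v : V, is_sink v <-> v = snk Z).

Definition st_path (p : seq E) : bool :=
  is_walk (src Z) p && (last (src Z) (map (@hd _ Z) p) == snk Z).

Definition var_of (e : E) : option Var := omap fst (lab e).

Definition Vars : {set Var} := [set x | [exists e, var_of e == Some x]].

Definition lits (p : seq E) : {set literal Var} :=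
  [set l | has (fun e => lab e == Some l) p].

Definition computational (p : seq E) : bool :=
  [forall x : Var, ~~ (((x, true) \in lits p) && ((x, false) \in lits p))].

Definition assigns_neg (p : seq E) (x : Var) : bool := (x, false) \in lits p.

Definition uniform_read (d : nat) : Prop :=
  forall p : seq E, st_path p ->
    forall x : Var, x \in Vars -> count (fun e => var_of e == Some x) p = d.

Definition through (X : {set V}) (p : seq E) : bool :=
  [forall x in X, x \in walk_vertices (src Z) p].

(* The partition of a path generated by X: the path is cut at every visited
   vertex of X.  [split_at X p] is the list [P_1; ...; P_c] of subpaths. *)
Fixpoint split_at (X : {set V}) (p : seq E) : seq (seq E) :=
  match p with
  | [::] => [:: [::]]
  | e :: p' =>
      let r := split_at X p' in
      if hd e \in X then [:: e] :: r
      else match r with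
           | c :: r' => (e :: c) :: r'
           | [::] => [:: [:: e]]
           end
  end.

(* In the partition, variables of A label edges only of P_i with i odd and
   variables of B only of P_i with i even (P_i is the (i-1)-th element,
   0-based, of [split_at X p]). *)
Definition odd_even_split (X : {set V}) (p : seq E) (A B : {set Var}) : Prop :=
  forall (i : nat) (e : E), e \in nth [::] (split_at X p) i ->
    forall x : Var, var_of e = Some x ->
      (x \in A -> odd i.+1) /\ (x \in B -> ~~ odd i.+1).

Definition separates (X : {set V}) (Y1 Y2 : {set Var}) : Prop :=
  src Z \notin X /\ snk Z \notin X /\
  exists p : seq E, [/\ st_path p, computational p, through X p &
    odd_even_split X p Y1 Y2 \/ odd_even_split X p Y2 Y1].

End NBPDefs.

Definition is_assignment (Var : finType) (S : {set literal Var}) (W : {set Var})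
  : Prop :=
  (forall l, l \in S -> l.1 \in W) /\
  (forall x, x \in W -> ((x, true) \in S) || ((x, false) \in S)) /\
  (forall x, ~~ (((x, true) \in S) && ((x, false) \in S))).

(* Main.v *)
Require Import Defs.
From mathcomp Require Import all_boot zify.
Set Implicit Arguments. Unset Strict Implicit. Unset Printing Implicit Defensive.

Definition lastv (Var : finType) (Z : nbp Var) (u : vtx Z) (p : seq (edge Z)) :=
  last u (map (@hd _ Z) p).

Definition xt (Var : finType) (Z : nbp Var) (X : {set vtx Z}) (p : seq (edge Z)) :=
  [seq v <- map (@hd _ Z) p | v \in X].

Fixpoint mixs (T : Type) (c : nat -> bool) (r1 r2 : seq (seq T)) : seq T :=
  match r1, r2 with
  | s1 :: r1', s2 :: r2' => (if c 0 then s1 else s2) ++ mixs (fun n => c n.+1) r1' r2'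
  | _, _ => [::]
  end.

Fixpoint algn (Var : finType) (Z : nbp Var) (X : {set vtx Z}) (u : vtx Z)
  (r1 r2 : seq (seq (edge Z))) : bool :=
  match r1, r2 with
  | [::], [::] => u == snk Z
  | s1 :: r1', s2 :: r2' => [&& is_walk u s1, is_walk u s2, lastv u s1 == lastv u s2,
       xt X s1 == xt X s2 & algn X (lastv u s1) r1' r2']
  | _, _ => false
  end.

Lemma algn_cons (Var : finType) (Z : nbp Var) (X : {set vtx Z}) (u : vtx Z) s1 r1 s2 r2 :
  algn X u (s1 :: r1) (s2 :: r2) = [&& is_walk u s1, is_walk u s2, lastv u s1 == lastv u s2,
       xt X s1 == xt X s2 & algn X (lastv u s1) r1 r2].
Proof. by []. Qed.

Lemma walk_cat (Var : finType) (Z : nbp Var) (u : vtx Z) (p q : seq (edge Z)) :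
  is_walk u (p ++ q) = is_walk u p && is_walk (lastv u p) q.
Proof. by elim: p u => [|e p IH] u //=; rewrite IH andbA. Qed.

Lemma lastv_cat (Var : finType) (Z : nbp Var) (u : vtx Z) (p q : seq (edge Z)) :
  lastv u (p ++ q) = lastv (lastv u p) q.
Proof. by rewrite /lastv map_cat last_cat. Qed.

Lemma walk_prefix (Var : finType) (Z : nbp Var) (v : vtx Z) (p : seq (edge Z)) y :
  is_walk v p -> y \in map (@hd _ Z) p ->
  exists w, [/\ w != [::], is_walk v w & lastv v w = y].
Proof.
elim: p v => [|e p IH] v //= /andP[/eqP He Hw].
rewrite in_cons => /orP[/eqP->|Hy].
  by exists [:: e]; split => //=; rewrite He eqxx.
have [w [Hw0 Hww Hl]] := IH _ Hw Hy.
by exists (e :: w); split => //=; rewrite He eqxx.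
Qed.

Lemma noreturn (Var : finType) (Z : nbp Var)
  (Hac : forall (v : vtx Z) (p : seq (edge Z)), is_walk v p -> last v (map (@hd _ Z) p) = v -> p = [::])
  (v : vtx Z) p : is_walk v p -> v \in map (@hd _ Z) p -> False.
Proof.
move=> Hw Hv; have [w [Hw0 Hww Hl]] := walk_prefix Hw Hv.
by move: (Hac _ _ Hww Hl) Hw0 => ->.
Qed.

Lemma decomp (Var : finType) (Z : nbp Var) (X : {set vtx Z}) (p : seq (edge Z)) :
  all (fun e => @hd _ Z e \notin X) p \/
  exists p1 e p2, [/\ p = p1 ++ e :: p2, all (fun e => @hd _ Z e \notin X) p1 & @hd _ Z e \in X].
Proof.
elim: p => [|e p [H|[p1 [f [p2 [-> H1 H2]]]]]]; first by left.
- case He: (@hd _ Z e \in X).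
    by right; exists [::], e, p; split.
  by left; rewrite /= He H.
- case He: (@hd _ Z e \in X).
    by right; exists [::], e, (p1 ++ f :: p2); split.
  by right; exists (e :: p1), f, p2; split => //=; rewrite He H1.
Qed.

Lemma split_noX (Var : finType) (Z : nbp Var) (X : {set vtx Z}) (p : seq (edge Z)) :
  all (fun e => @hd _ Z e \notin X) p -> split_at X p = [:: p].
Proof.
elim: p => [|e p IH] //= /andP[He Hp].
by rewrite (negbTE He) IH.
Qed.

Lemma split_X (Var : finType) (Z : nbp Var) (X : {set vtx Z}) p1 e p2 :
  all (fun e => @hd _ Z e \notin X) p1 -> @hd _ Z e \in X ->
  split_at X (p1 ++ e :: p2) = rcons p1 e :: split_at X p2.
Proof.
move=> H1 He; elim: p1 H1 => [|f p1 IH] /=; first by rewrite He.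
by move=> /andP[Hf H1]; rewrite (negbTE Hf) IH.
Qed.

Lemma flatten_split (Var : finType) (Z : nbp Var) (X : {set vtx Z}) (p : seq (edge Z)) :
  flatten (split_at X p) = p.
Proof.
elim: p => [|e p IH] //=.
case: (@hd _ Z e \in X) => /=; first by rewrite IH.
by move: IH; case: (split_at X p) => [|c r] /= <-.
Qed.

Lemma xt_noX (Var : finType) (Z : nbp Var) (X : {set vtx Z}) (p : seq (edge Z)) :
  all (fun e => @hd _ Z e \notin X) p -> xt X p = [::].
Proof.
rewrite /xt; elim: p => [|e p IH] //= /andP[He Hp].
by rewrite (negbTE He) IH.
Qed.

Lemma xt_cat (Var : finType) (Z : nbp Var) (X : {set vtx Z}) (p q : seq (edge Z)) :
  xt X (p ++ q) = xt X p ++ xt X q.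
Proof. by rewrite /xt map_cat filter_cat. Qed.

Lemma notX_map (Var : finType) (Z : nbp Var) (X : {set vtx Z}) (p : seq (edge Z)) x :
  all (fun e => @hd _ Z e \notin X) p -> x \in X -> (x \in map (@hd _ Z) p) = false.
Proof.
move=> H Hx; apply/negbTE/negP => /mapP[e He Hxe].
by move/allP: H => /(_ e He); rewrite -Hxe Hx.
Qed.

Lemma mem_splitX (Var : finType) (Z : nbp Var) (X : {set vtx Z}) p1 e p2 x :
  all (fun e => @hd _ Z e \notin X) p1 -> x \in X ->
  (x \in map (@hd _ Z) (p1 ++ e :: p2)) = (x == @hd _ Z e) || (x \in map (@hd _ Z) p2).
Proof. by move=> H Hx; rewrite map_cat mem_cat (notX_map H Hx) /= in_cons. Qed.

Lemma walk_split (Var : finType) (Z : nbp Var) (u : vtx Z) p1 e p2 :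
  is_walk u (p1 ++ e :: p2) = is_walk u (rcons p1 e) && is_walk (@hd _ Z e) p2.
Proof. by rewrite -cats1 !walk_cat /= andbT andbA. Qed.

Lemma lastv_rcons (Var : finType) (Z : nbp Var) (u : vtx Z) p1 e :
  lastv u (rcons p1 e) = @hd _ Z e.
Proof. by rewrite /lastv map_rcons last_rcons. Qed.

Lemma lastv_split (Var : finType) (Z : nbp Var) (u : vtx Z) p1 e p2 :
  lastv u (p1 ++ e :: p2) = lastv (@hd _ Z e) p2.
Proof. by rewrite lastv_cat. Qed.

Lemma align_noX (Var : finType) (Z : nbp Var) (X : {set vtx Z}) (u : vtx Z) (p q : seq (edge Z)) :
  all (fun e => @hd _ Z e \notin X) p ->
  is_walk u p -> is_walk u q -> lastv u p = snk Z -> lastv u q = snk Z ->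
  (forall x, x \in X -> (x \in map (@hd _ Z) p) = (x \in map (@hd _ Z) q)) ->
  algn X u (split_at X p) (split_at X q).
Proof.
move=> Hp Hwp Hwq Hlp Hlq Heq.
case: (decomp X q) => [Hq|[q1 [f [q2 [Eq H1 H2]]]]].
  rewrite !split_noX // algn_cons Hwp Hwq Hlp Hlq !xt_noX //= eqxx.
  by [].

have := Heq _ H2; rewrite Eq (mem_splitX f q2 H1 H2) eqxx /= (notX_map Hp H2) //.
Qed.

Lemma xt_rcons (Var : finType) (Z : nbp Var) (X : {set vtx Z}) p1 e :
  all (fun e => @hd _ Z e \notin X) p1 -> @hd _ Z e \in X -> xt X (rcons p1 e) = [:: @hd _ Z e].
Proof. by move=> H He; rewrite /xt map_rcons filter_rcons He -/(xt X p1) xt_noX. Qed.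

Lemma align (Var : finType) (Z : nbp Var) (X : {set vtx Z})
  (Hac : forall (v : vtx Z) (p : seq (edge Z)), is_walk v p -> last v (map (@hd _ Z) p) = v -> p = [::]) :
  forall n (u : vtx Z) (p q : seq (edge Z)), size p <= n ->
  is_walk u p -> is_walk u q -> lastv u p = snk Z -> lastv u q = snk Z ->
  (forall x, x \in X -> (x \in map (@hd _ Z) p) = (x \in map (@hd _ Z) q)) ->
  algn X u (split_at X p) (split_at X q).
Proof.
elim=> [|n IH] u p q Hs Hwp Hwq Hlp Hlq Heq.
  by case: p Hs Hwp Hlp Heq => // _ Hwp Hlp Heq; apply: align_noX.
case: (decomp X p) => [Hp|[p1 [e [p2 [Ep H1 H2]]]]]; first by apply: align_noX.
case: (decomp X q) => [Hq|[q1 [f [q2 [Eq K1 K2]]]]].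
  by have := Heq _ H2; rewrite Ep (mem_splitX e p2 H1 H2) eqxx /= (notX_map Hq H2).
subst p q.
move: Hwp Hwq; rewrite !walk_split => /andP[Hr1 Hp2] /andP[Hr2 Hq2].
move: Hlp Hlq; rewrite !lastv_split => Hlp Hlq.
have Hab : @hd _ Z e = @hd _ Z f.
  apply/eqP; apply/negPn/negP => Hne.
  have Hb : @hd _ Z f \in map (@hd _ Z) p2.
    have := Heq _ K2; rewrite (mem_splitX e p2 H1 K2) (mem_splitX f q2 K1 K2) eqxx /=.
    by rewrite eq_sym (negbTE Hne).
  have Ha : @hd _ Z e \in map (@hd _ Z) q2.
    have := Heq _ H2; rewrite (mem_splitX e p2 H1 H2) (mem_splitX f q2 K1 H2) eqxx /=.
    by rewrite (negbTE Hne) /= => <-.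
  have [w1 [Hw10 Hww1 Hl1]] := walk_prefix Hp2 Hb.
  have [w2 [Hw20 Hww2 Hl2]] := walk_prefix Hq2 Ha.
  have := Hac (@hd _ Z e) (w1 ++ w2).
  rewrite walk_cat Hww1 Hl1 Hww2 => /(_ isT).
  rewrite -/(lastv _ _) lastv_cat Hl1 Hl2 => /(_ erefl) /eqP.
  by case: w1 Hw10 {Hww1 Hl1}.
have side : forall (p1 : seq (edge Z)) e p2 q1 f q2,
    all (fun e => @hd _ Z e \notin X) p1 -> all (fun e => @hd _ Z e \notin X) q1 ->
    @hd _ Z e = @hd _ Z f -> is_walk (@hd _ Z e) p2 ->
    (forall x, x \in X -> (x \in map (@hd _ Z) (p1 ++ e :: p2)) = (x \in map (@hd _ Z) (q1 ++ f :: q2))) ->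
    forall x, x \in X -> x \in map (@hd _ Z) p2 -> x \in map (@hd _ Z) q2.
  move=> a1 a b1 c1 a' c2 Ha1 Hc1 Haa Hw Hq x Hx Hxin.
  have := Hq _ Hx; rewrite (mem_splitX a b1 Ha1 Hx) (mem_splitX a' c2 Hc1 Hx) Hxin orbT.
  move=> /esym /orP [/eqP Hxe|//]; exfalso; apply: (noreturn Hac Hw).
  by rewrite Haa -Hxe.
rewrite !split_X // algn_cons Hr1 Hr2 !lastv_rcons Hab eqxx.
rewrite (xt_rcons H1 H2) (xt_rcons K1 K2) Hab eqxx /=.
apply: IH => //.
- by move: Hs; rewrite size_cat /= addnS ltnS => /(leq_trans _); apply; apply: leq_addl.
- by rewrite -Hab.
- by rewrite -Hab.
- move=> x Hx; apply/idP/idP.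
    by apply: (side p1 e p2 q1 f q2).
  apply: (side q1 f q2 p1 e p2) => //.
  by move=> y Hy; rewrite Heq.
Qed.

Lemma flat_cons (T : Type) (s : seq T) r : flatten (s :: r) = s ++ flatten r.
Proof. by []. Qed.


Lemma mix_walk (Var : finType) (Z : nbp Var) (X : {set vtx Z}) :
  forall (r1 r2 : seq (seq (edge Z))) c u, algn X u r1 r2 ->
  is_walk u (mixs c r1 r2) && (lastv u (mixs c r1 r2) == snk Z).
Proof.
elim=> [|s1 r1 IH] [|s2 r2] c u //=.
move/and5P => [Hw1 Hw2 /eqP Hl Hx Ha].
rewrite walk_cat lastv_cat.
have := IH r2 (fun n => c n.+1) _ Ha.
by case: (c 0); rewrite ?Hw1 ?Hw2 -?Hl.
Qed.

Lemma xt_mix (Var : finType) (Z : nbp Var) (X : {set vtx Z}) :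
  forall (r1 r2 : seq (seq (edge Z))) c u, algn X u r1 r2 ->
  xt X (mixs c r1 r2) = xt X (flatten r1).
Proof.
elim=> [|s1 r1 IH] [|s2 r2] c u //=.
move/and5P => [Hw1 Hw2 /eqP Hl /eqP Hx Ha].
rewrite xt_cat (IH r2 (fun n => c n.+1) _ Ha) -flat_cons.
by case: (c 0); rewrite ?xt_cat ?Hx.
Qed.

Lemma algn_size (Var : finType) (Z : nbp Var) (X : {set vtx Z}) :
  forall (r1 r2 : seq (seq (edge Z))) u, algn X u r1 r2 -> size r1 = size r2.
Proof.
elim=> [|s1 r1 IH] [|s2 r2] u //= /and5P [_ _ _ _ Ha].
by rewrite (IH _ _ Ha).
Qed.

Lemma mem_mix (T : eqType) (x : T) :
  forall (r1 r2 : seq (seq T)) (c : nat -> bool), x \in mixs c r1 r2 ->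
  exists i, (c i && (x \in nth [::] r1 i)) || (~~ c i && (x \in nth [::] r2 i)).
Proof.
elim=> [|s1 r1 IH] [|s2 r2] c //=.
rewrite mem_cat; case Hc: (c 0) => /orP[Hx|Hx].
- by exists 0; rewrite Hc Hx.
- by have [i Hi] := IH _ _ Hx; exists i.+1.
- by exists 0; rewrite Hc Hx.
- by have [i Hi] := IH _ _ Hx; exists i.+1.
Qed.

Lemma mix_mem1 (T : eqType) (x : T) :
  forall (r1 r2 : seq (seq T)) (c : nat -> bool) i, size r1 = size r2 -> c i ->
  x \in nth [::] r1 i -> x \in mixs c r1 r2.
Proof.
elim=> [|s1 r1 IH] [|s2 r2] c [|i] //=; rewrite ?nth_nil ?in_nil //.
- by move=> _ -> Hx; rewrite mem_cat Hx.
- move=> [Hs] Hc Hx; rewrite mem_cat (IH r2 (fun n => c n.+1) i) ?orbT //.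
Qed.

Lemma mix_mem2 (T : eqType) (x : T) :
  forall (r1 r2 : seq (seq T)) (c : nat -> bool) i, size r1 = size r2 -> ~~ c i ->
  x \in nth [::] r2 i -> x \in mixs c r1 r2.
Proof.
elim=> [|s1 r1 IH] [|s2 r2] c [|i] //=; rewrite ?nth_nil ?in_nil //.
- by move=> _ /negbTE -> Hx; rewrite mem_cat Hx.
- move=> [Hs] Hc Hx; rewrite mem_cat (IH r2 (fun n => c n.+1) i) ?orbT //.
Qed.

Lemma mem_flat (T : eqType) (x : T) (r : seq (seq T)) :
  x \in flatten r -> exists i, x \in nth [::] r i.
Proof.
elim: r => [|s r IH] //=; rewrite mem_cat => /orP[Hx|Hx]; first by exists 0.
by have [i Hi] := IH Hx; exists i.+1.
Qed.

Lemma flat_mem (T : eqType) (x : T) (r : seq (seq T)) i :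
  x \in nth [::] r i -> x \in flatten r.
Proof.
elim: r i => [|s r IH] [|i] //=; rewrite ?nth_nil ?in_nil // mem_cat.
  by move=> ->.
by move=> H; rewrite (IH i H) orbT.
Qed.

Lemma count_mix_all (T : Type) (a : pred T) :
  forall (r1 r2 : seq (seq T)) (c : nat -> bool), size r1 = size r2 -> (forall j, c j) ->
  count a (mixs c r1 r2) = count a (flatten r1).
Proof.
elim=> [|s1 r1 IH] [|s2 r2] c //= [Hs] Hc.
by rewrite Hc !count_cat (IH r2).
Qed.

Lemma count_splice (T : Type) (a : pred T) :
  forall (r1 r2 : seq (seq T)) (c : nat -> bool) i, size r1 = size r2 -> ~~ c i ->
  (forall j, j != i -> c j) ->
  count a (mixs c r1 r2) + count a (nth [::] r1 i) =
  count a (flatten r1) + count a (nth [::] r2 i).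
Proof.
elim=> [|s1 r1 IH] [|s2 r2] c i //=.
move=> [Hs] Hci Hc; case: i Hci Hc => [|i] Hci Hc /=.
  rewrite (negbTE Hci) !count_cat (count_mix_all a Hs); last by move=> j; apply: Hc.
  lia.
rewrite Hc // !count_cat -addnA (IH r2 _ i) // ?addnA //.
by move=> j Hj; apply: Hc.
Qed.

Lemma lits_in (Var : finType) (Z : nbp Var) (q : seq (edge Z)) f l :
  f \in q -> lab f = Some l -> l \in lits q.
Proof. by move=> Hf Hl; rewrite inE; apply/hasP; exists f => //; rewrite Hl. Qed.

Lemma lits_ex (Var : finType) (Z : nbp Var) (q : seq (edge Z)) l :
  l \in lits q -> exists2 f, f \in q & lab f = Some l.
Proof. by rewrite inE => /hasP[f Hf /eqP Hl]; exists f. Qed.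

Lemma sign_eq (Var : finType) (Z : nbp Var) (q : seq (edge Z)) x b b' :
  computational q -> (x, b) \in lits q -> (x, b') \in lits q -> b = b'.
Proof.
move=> /forallP /(_ x) Hc H1 H2; case: b b' H1 H2 => [] [] // H1 H2.
- by move: Hc; rewrite H1 H2.
- by move: Hc; rewrite H1 H2.
Qed.

Lemma var_in_Vars (Var : finType) (Z : nbp Var) (e : edge Z) x :
  var_of e = Some x -> x \in Vars Z.
Proof. by move=> H; rewrite inE; apply/existsP; exists e; rewrite H. Qed.

Lemma through_heads (Var : finType) (Z : nbp Var) (X : {set vtx Z}) (p : seq (edge Z)) :
  src Z \notin X -> through X p -> forall x, x \in X -> x \in map (@hd _ Z) p.
Proof.
move=> HsX /forallP Ht x Hx; move: (Ht x); rewrite Hx /= /walk_vertices in_cons.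
by case/orP => [/eqP Hxs|//]; move: HsX; rewrite -Hxs Hx.
Qed.

Lemma align_st (Var : finType) (Z : nbp Var) (X : {set vtx Z})
  (Hac : forall (v : vtx Z) (p : seq (edge Z)), is_walk v p -> last v (map (@hd _ Z) p) = v -> p = [::])
  (p q : seq (edge Z)) :
  src Z \notin X -> st_path p -> st_path q -> through X p -> through X q ->
  algn X (src Z) (split_at X p) (split_at X q).
Proof.
move=> HsX /andP[Hwp /eqP Hlp] /andP[Hwq /eqP Hlq] Htp Htq.
apply: (align Hac (leqnn (size p))) => // x Hx.
by rewrite (through_heads HsX Htp Hx) (through_heads HsX Htq Hx).
Qed.

Lemma oe_transfer (Var : finType) (Z : nbp Var) d (X : {set vtx Z})
  (Hread : uniform_read Z d) (P Q : seq (edge Z)) (A B : {set Var}) :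
  st_path P -> odd_even_split X P A B ->
  algn X (src Z) (split_at X P) (split_at X Q) -> odd_even_split X Q A B.
Proof.
move=> HP Hoe Hal i e He x Hx.
have Hsz := algn_size Hal.
have HxV := var_in_Vars Hx.
suff H : (forall f, f \in nth [::] (split_at X P) i -> var_of f <> Some x) -> False.
  split => Hxx.
    apply: contraT => Hodd; exfalso; apply: H => f Hf Hfx.
    by have := (Hoe i f Hf x Hfx).1 Hxx; rewrite (negbTE Hodd).
  apply/negP => Hodd; apply: H => f Hf Hfx.
  by have := (Hoe i f Hf x Hfx).2 Hxx; rewrite Hodd.
move=> Hno.
pose c := fun j => j != i.
have Hst : st_path (mixs c (split_at X P) (split_at X Q)) := mix_walk c Hal.
have HR := Hread _ Hst x HxV.
have HPc := Hread _ HP x HxV.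
have := count_splice (fun e => var_of e == Some x) Hsz (c := c) (i := i).
rewrite /c eqxx => /(_ isT (fun j Hj => Hj)).
rewrite flatten_split HR HPc.
have -> : count (fun e => var_of e == Some x) (nth [::] (split_at X P) i) = 0.
  apply/eqP; rewrite -leqn0 leqNgt -has_count; apply/hasPn => f Hf.
  by apply/eqP; apply: Hno.
have : 0 < count (fun e => var_of e == Some x) (nth [::] (split_at X Q) i).
  by rewrite -has_count; apply/hasP; exists e => //; rewrite Hx.
lia.
Qed.

Theorem lemma6 (Var : finType) (Z : nbp Var) (d : nat)
  (HZ : nbp_wf Z) (Hread : uniform_read Z d)
  (X : {set vtx Z}) (Y1 Y2 : {set Var})
  (HY1 : Y1 \subset Vars Z) (HY2 : Y2 \subset Vars Z)
  (HY12 : [disjoint Y1 & Y2])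
  (Hsep : separates X Y1 Y2)
  (Y1' Y2' : {set Var}) (HY1' : Y1' \subset Y1) (HY2' : Y2' \subset Y2)
  (S : {set literal Var})
  (HS : is_assignment S (Vars Z :\: (Y1 :|: Y2)))
  (Q' Q'' : seq (edge Z))
  (HQ' : st_path Q') (HcQ' : computational Q') (HXQ' : through X Q')
  (HQ'' : st_path Q'') (HcQ'' : computational Q'') (HXQ'' : through X Q'')
  (HSQ : S \subset lits Q' :&: lits Q'')
  (HnegQ' : forall y, y \in Y1' -> assigns_neg Q' y)
  (HnegQ'' : forall y, y \in Y2' -> assigns_neg Q'' y) :
  exists Qs : seq (edge Z),
    [/\ st_path Qs, computational Qs, through X Qs, S \subset lits Qs &
      forall y, y \in Y1' :|: Y2' -> assigns_neg Qs y].
Proof.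
case: HZ => Hac _.
move: Hsep => [HsX [HtX [P [HP HcP HXP Hoe]]]].
have Ha1 := align_st Hac HsX HP HQ' HXP HXQ'.
have Ha2 := align_st Hac HsX HP HQ'' HXP HXQ''.
have Ha12 := align_st Hac HsX HQ' HQ'' HXQ' HXQ''.
have Hsz := algn_size Ha12.
set r1 := split_at X Q' in Ha1 Ha12 Hsz *.
set r2 := split_at X Q'' in Ha2 Ha12 Hsz *.
have [c Hc] : exists c : nat -> bool, forall i e x,
    (e \in nth [::] r1 i \/ e \in nth [::] r2 i) -> var_of e = Some x ->
    (x \in Y1 -> c i) /\ (x \in Y2 -> ~~ c i).
  case: Hoe => Hoe.
    exists (fun i => odd i.+1) => i e x [He|He] Hx.
      exact: (oe_transfer Hread HP Hoe Ha1 He Hx).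
    exact: (oe_transfer Hread HP Hoe Ha2 He Hx).
  exists (fun i => ~~ odd i.+1) => i e x [He|He] Hx.
    have [H1 H2] := oe_transfer Hread HP Hoe Ha1 He Hx.
    by rewrite negbK; split.
  have [H1 H2] := oe_transfer Hread HP Hoe Ha2 He Hx.
  by rewrite negbK; split.
set M := mixs c r1 r2.
have Hfrom : forall f x b, f \in M -> lab f = Some (x, b) ->
    [/\ x \in Y1 -> (x, b) \in lits Q', x \in Y2 -> (x, b) \in lits Q'' &
      ((x, b) \in lits Q') || ((x, b) \in lits Q'')].
  move=> f x b Hf Hl.
  have Hv : var_of f = Some x by rewrite /var_of Hl.
  have [i /orP[/andP[Hci Hfi]|/andP[Hci Hfi]]] := mem_mix Hf.
    have HfQ : f \in Q' by rewrite -(flatten_split X Q'); apply: flat_mem Hfi.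
    have HL := lits_in HfQ Hl.
    split; rewrite ?HL //.
    by move=> Hx2; have := (Hc i f x (or_introl Hfi) Hv).2 Hx2; rewrite Hci.
  have HfQ : f \in Q'' by rewrite -(flatten_split X Q''); apply: flat_mem Hfi.
  have HL := lits_in HfQ Hl.
  split; rewrite ?HL ?orbT //.
  by move=> Hx1; have := (Hc i f x (or_intror Hfi) Hv).1 Hx1; rewrite (negbTE Hci).
have Sagree : forall x b b0, ((x, b) \in lits Q') || ((x, b) \in lits Q'') ->
    (x, b0) \in S -> b = b0.
  move=> x b b0 /orP[H|H] HS0; move/subsetP: HSQ => /(_ _ HS0); rewrite inE => /andP[H1 H2].
    exact: (sign_eq HcQ' H H1).
  exact: (sign_eq HcQ'' H H2).
case: HS => HS1 [HS2 HS3].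
exists M; split.
- exact: (mix_walk c Ha12).
- apply/forallP => x; apply/negP => /andP[Ht Hf].
  have [f1 Hf1 Hl1] := lits_ex Ht.
  have [f2 Hf2 Hl2] := lits_ex Hf.
  have [A1 B1 C1] := Hfrom _ _ _ Hf1 Hl1.
  have [A2 B2 C2] := Hfrom _ _ _ Hf2 Hl2.
  have HxV : x \in Vars Z by apply: (@var_in_Vars _ _ f1); rewrite /var_of Hl1.
  case Hx1 : (x \in Y1).
    by have := sign_eq HcQ' (A1 Hx1) (A2 Hx1).
  case Hx2 : (x \in Y2).
    by have := sign_eq HcQ'' (B1 Hx2) (B2 Hx2).
  have HxW : x \in Vars Z :\: (Y1 :|: Y2) by rewrite in_setD in_setU Hx1 Hx2 HxV.
  case/orP: (HS2 x HxW) => Hs.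
    by have := Sagree _ _ _ C2 Hs.
  by have := Sagree _ _ _ C1 Hs.
- apply/forallP => x; apply/implyP => Hx.
  rewrite /walk_vertices in_cons; apply/orP; right.
  have Hq := through_heads HsX HXQ' Hx.
  have : x \in xt X M.
    by rewrite (xt_mix c Ha12) /r1 flatten_split /xt mem_filter Hx Hq.
  by rewrite /xt mem_filter Hx.
- apply/subsetP => [[x b]] Hl.
  have HxW : x \in Vars Z :\: (Y1 :|: Y2) := HS1 _ Hl.
  move: (HxW); rewrite in_setD => /andP[Hn HxV].
  have HlQ : (x, b) \in lits Q' by move/subsetP: HSQ => /(_ _ Hl); rewrite inE => /andP[].
  have [e He Hle] := lits_ex HlQ.
  have HcQ := Hread _ HQ' x HxV.
  have HcM := Hread _ (mix_walk c Ha12) x HxV.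
  have : 0 < count (fun e => var_of e == Some x) M.
    rewrite -/M in HcM; rewrite HcM -HcQ -has_count; apply/hasP; exists e => //.
    by rewrite /var_of Hle.
  rewrite -has_count => /hasP[f Hf /eqP Hv].
  move: Hv; rewrite /var_of; case Hlf: (lab f) => [[y b']|] //= [Hy]; subst y.
  have [_ _ C] := Hfrom _ _ _ Hf Hlf.
  have Hb := Sagree _ _ _ C Hl; subst b'.
  exact: lits_in Hf Hlf.
- move=> y; rewrite inE => /orP[Hy|Hy].
    have [e He Hle] := lits_ex (HnegQ' _ Hy).
    move: He; rewrite -(flatten_split X Q') => /mem_flat[i Hi].
    have Hv : var_of e = Some y by rewrite /var_of Hle.
    have Hci := (Hc i e y (or_introl Hi) Hv).1 (subsetP HY1' _ Hy).
    exact: lits_in (mix_mem1 Hsz Hci Hi) Hle.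
  have [e He Hle] := lits_ex (HnegQ'' _ Hy).
  move: He; rewrite -(flatten_split X Q'') => /mem_flat[i Hi].
  have Hv : var_of e = Some y by rewrite /var_of Hle.
  have Hci := (Hc i e y (or_intror Hi) Hv).2 (subsetP HY2' _ Hy).
  exact: lits_in (mix_mem2 Hsz Hci Hi) Hle.
Qed.
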